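(* Let $G=(V,E,W)$ be a finite connected weighted graph and let $\sigma$ be an inconsistent $d$-dimensional signature on $G$. Let $\rho$ denote the nullity of the connection Laplacian $\mathcal{L}^\sigma$. Then there exists a $(d-\rho)$-dimensional signature $\tau$ on $G$ such that $\mathcal{L}^\tau$ is invertible and $$\sigma\cong \Big(\bigoplus_{i=1}^{\rho}\iota^1\Big)\oplus\tau .$$
   Context: $G=(V,E,W)$: $V=\{1,\dots,n\}$, $E$ a set of undirected edges without loops or multiple edges, symmetric weights $w_{ij}>0$ iff $\{i,j\}\in E$, $\deg(i)=\sum_{j\sim i}w_{ij}$. The oriented edges are $E^{\mathrm{or}}=\{(i,j),(j,i):\{i,j\}\in E\}$. A $d$-dimensional signature is a map $\sigma:E^{\mathrm{or}}\to\mathsf{O}(d)$ with $\sigma_{ji}=\sigma_{ij}^{-1}=\sigma_{ij}^{\mathrm T}$. Its connection Laplacian $\mathcal{L}^\sigma$ is the $nd\times nd$ block matrix with $d\times d$ blocks $\mathcal{L}_{ii}=\deg(i)I_d$, $\mathcal{L}_{ij}=-w_{ij}\sigma_{ij}$ if $i\sim j$, and $0$ otherwise. $\sigma$ is consistent if the product of $\sigma$ along every directed cycle is $I_d$, and inconsistent otherwise. Two $d$-dimensional signatures satisfy $\sigma\cong\tau$ (switching equivalence) if there is $f:V\to\mathsf{O}(d)$ with $f(i)\sigma_{ij}=\tau_{ij}f(j)$ for all $(i,j)\in E^{\mathrm{or}}$. For a $d$-dimensional signature $\sigma$ and a $d'$-dimensional signature $\sigma'$, the direct sum is $(\sigma\oplus\sigma')_{ij}=\begin{bmatrix}\sigma_{ij}&0\\0&\sigma'_{ij}\end{bmatrix}$.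 $\iota^1$ denotes the $1$-dimensional signature identically equal to $1$. *)

(* Defs.v *)
From HB Require Import structures.
From mathcomp Require Import all_boot all_order all_algebra.
From mathcomp Require Import reals.
Set Implicit Arguments. Unset Strict Implicit. Unset Printing Implicit Defensive.
Import Order.TTheory GRing.Theory Num.Theory.
Local Open Scope ring_scope.

Definition weighted_graph (R : realType) (n : nat) (w : 'I_n -> 'I_n -> R) : Prop :=
  (forall i j, w i j = w j i) /\ (forall i, w i i = 0) /\ (forall i j, 0 <= w i j).

Definition adj (R : realType) (n : nat) (w : 'I_n -> 'I_n -> R) : rel 'I_n :=
  fun i j => 0 < w i j.

Definition connected_graph (R : realType) (n : nat) (w : 'I_n -> 'I_n -> R) : Prop :=
  forall i j : 'I_n, connect (adj w) i j.

Definition deg (R : realType) (n : nat) (w : 'I_n -> 'I_n -> R) (i : 'I_n) : R :=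
  \sum_(j < n) w i j.

Definition orthogonal_mx (R : realType) (d : nat) (M : 'M[R]_d) : Prop :=
  M *m M^T = 1%:M.

(* A d-dimensional signature: values on oriented edges (values on non-edges
   are irrelevant), in O(d), with sigma j i = (sigma i j)^T. *)
Definition signature (R : realType) (n d : nat) (w : 'I_n -> 'I_n -> R)
  (sigma : 'I_n -> 'I_n -> 'M[R]_d) : Prop :=
  forall i j, adj w i j -> orthogonal_mx (sigma i j) /\ sigma j i = (sigma i j)^T.

Definition conn_lap (R : realType) (n d : nat) (w : 'I_n -> 'I_n -> R)
  (sigma : 'I_n -> 'I_n -> 'M[R]_d) : 'M[R]_(\sum_(i < n) d) :=
  \mxblock_(i < n, j < n)
    (if i == j then (deg w i) *: (1%:M : 'M[R]_d) else - (w i j *: sigma i j)).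

Definition nullity (R : realType) (m : nat) (A : 'M[R]_m) : nat := (m - \rank A)%N.

(* Product of sigma along the directed cycle c = [v0; ...; v_{k-1}]:
   sigma_{v0 v1} sigma_{v1 v2} ... sigma_{v_{k-1} v0}. *)
Definition cycle_prod (R : realType) (n d : nat) (sigma : 'I_n -> 'I_n -> 'M[R]_d)
  (c : seq 'I_n) : 'M[R]_d :=
  foldr (fun p M => sigma p.1 p.2 *m M) 1%:M (zip c (rot 1 c)).

Definition directed_cycle (R : realType) (n : nat) (w : 'I_n -> 'I_n -> R)
  (c : seq 'I_n) : Prop :=
  (3 <= size c)%N /\ uniq c /\ cycle (adj w) c.

Definition consistent (R : realType) (n d : nat) (w : 'I_n -> 'I_n -> R)
  (sigma : 'I_n -> 'I_n -> 'M[R]_d) : Prop :=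
  forall c, directed_cycle w c -> cycle_prod sigma c = 1%:M.

Definition switching_equiv (R : realType) (n d : nat) (w : 'I_n -> 'I_n -> R)
  (sigma tau : 'I_n -> 'I_n -> 'M[R]_d) : Prop :=
  exists f : 'I_n -> 'M[R]_d,
    (forall i, orthogonal_mx (f i)) /\
    (forall i j, adj w i j -> f i *m sigma i j = tau i j *m f j).

Definition sig_dsum (R : realType) (n d1 d2 : nat)
  (s1 : 'I_n -> 'I_n -> 'M[R]_d1) (s2 : 'I_n -> 'I_n -> 'M[R]_d2)
  : 'I_n -> 'I_n -> 'M[R]_(d1 + d2) :=
  fun i j => block_mx (s1 i j) 0 0 (s2 i j).

Definition iota1 (R : realType) (n : nat) : 'I_n -> 'I_n -> 'M[R]_1 :=
  fun _ _ => 1%:M.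

Fixpoint iota_pow (R : realType) (n k : nat) : 'I_n -> 'I_n -> 'M[R]_k :=
  match k with
  | 0 => fun _ _ => 1%:M
  | k'.+1 => @sig_dsum R n 1 k' (@iota1 R n) (@iota_pow R n k')
  end.

(* Main.v *)
Require Import Defs.
From HB Require Import structures.
From mathcomp Require Import all_boot all_order all_algebra.
From mathcomp Require Import reals.
Set Implicit Arguments. Unset Strict Implicit. Unset Printing Implicit Defensive.
Import Order.TTheory GRing.Theory Num.Theory.
Local Open Scope ring_scope.

Lemma tr_mulmx_tr (R : realType) m k (M : 'M[R]_(m, k)) :
  \tr (M *m M^T) = \sum_a \sum_b M a b ^+ 2.
Proof.
rewrite /mxtrace; apply: eq_bigr => a _; rewrite mxE; apply: eq_bigr => b _.
by rewrite mxE expr2.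
Qed.

Lemma tr_mulmx_tr_ge0 (R : realType) m k (M : 'M[R]_(m, k)) :
  0 <= \tr (M *m M^T).
Proof.
rewrite tr_mulmx_tr; apply: sumr_ge0 => a _; apply: sumr_ge0 => b _.
exact: sqr_ge0.
Qed.

Lemma tr_mulmx_tr_eq0 (R : realType) m k (M : 'M[R]_(m, k)) :
  \tr (M *m M^T) = 0 -> M = 0.
Proof.
rewrite tr_mulmx_tr => /eqP; rewrite psumr_eq0; last first.
  by move=> a _; apply: sumr_ge0 => b _; exact: sqr_ge0.
move=> /allP H; apply/matrixP => a b; rewrite mxE.
have /H : a \in index_enum 'I_m by rewrite mem_index_enum.
rewrite /= psumr_eq0; last by move=> c _; exact: sqr_ge0.
move=> /allP/(_ b); rewrite mem_index_enum => /(_ isT) /=.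
by rewrite sqrf_eq0 => /eqP.
Qed.

Lemma orth_rank (R : realType) r N (Q : 'M[R]_(r, N)) :
  Q *m Q^T = 1%:M -> \rank Q = r.
Proof.
move=> QQ; apply/eqP; rewrite eqn_leq rank_leq_row /=.
by rewrite -{1}(mxrank1 R r) -QQ mxrankM_maxl.
Qed.

Lemma unit_vec (R : realType) N (v : 'rV[R]_N) : v != 0 ->
  exists v' : 'rV[R]_N, v' *m v'^T = 1%:M /\ (v' <= v)%MS.
Proof.
move=> nz.
set s := \tr (v *m v^T).
have s_gt0 : 0 < s.
  rewrite lt_def tr_mulmx_tr_ge0 andbT; apply/eqP => /tr_mulmx_tr_eq0 e.
  by rewrite e eqxx in nz.
exists ((Num.sqrt s)^-1 *: v); split; last by rewrite scalemx_sub.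
rewrite linearZ /= -scalemxAl -scalemxAr scalerA.
have -> : v *m v^T = s%:M.
  by apply/matrixP => a b; rewrite !ord1 /s /mxtrace big_ord1 !mxE eqxx mulr1n.
rewrite scale_scalar_mx; congr (_%:M).
rewrite -invfM -expr2 sqr_sqrtr ?ltW // mulVf //; exact: lt0r_neq0.
Qed.

Lemma orth_col (R : realType) m1 m2 N (A : 'M[R]_(m1, N)) (B : 'M[R]_(m2, N)) :
  A *m A^T = 1%:M -> B *m B^T = 1%:M -> A *m B^T = 0 ->
  col_mx A B *m (col_mx A B)^T = 1%:M.
Proof.
move=> AA BB AB.
rewrite tr_col_mx mul_col_row AA BB AB -[B *m A^T]trmxK trmx_mul trmxK AB.
by rewrite trmx0 -scalar_mx_block.
Qed.

Lemma orth_col2 (R : realType) r m1 m2 N (Q : 'M[R]_(r, N)) (A : 'M[R]_(m1, N))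
  (B : 'M[R]_(m2, N)) :
  Q *m A^T = 0 -> Q *m B^T = 0 -> Q *m (col_mx A B)^T = 0.
Proof. by move=> QA QB; rewrite tr_col_mx mul_mx_row QA QB row_mx0. Qed.

Lemma addSnnS_1 r k : (r + 1 + k = r + k.+1)%N.
Proof. by rewrite addn1 addSnnS. Qed.

Lemma gs_ext (R : realType) p N (U : 'M[R]_(p, N)) k : forall r (Q : 'M[R]_(r, N)),
  Q *m Q^T = 1%:M -> (Q <= U)%MS -> (r + k)%N = \rank U ->
  exists Q2 : 'M[R]_(k, N),
    [/\ Q2 *m Q2^T = 1%:M, Q *m Q2^T = 0 & (Q2 <= U)%MS].
Proof.
elim: k => [|k IH] r Q QQ QU rk.
  by exists 0; split; [apply/matrixP => [[]] | apply/matrixP => ? [] | rewrite sub0mx].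
have rQ := orth_rank QQ.
have [u uU uQ] : exists2 u : 'rV[R]_N, (u <= U)%MS & ~~ (u <= Q)%MS.
  have : ~~ (U <= Q)%MS.
    by apply/negP => UQ; have := mxrankS UQ; rewrite rQ -rk addnS ltnNge leq_addr.
  by case/row_subPn => i H; exists (row i U); rewrite ?row_sub.
set v := u - u *m Q^T *m Q.
have vU : (v <= U)%MS.
  by rewrite addmx_sub // eqmx_opp mulmx_sub.
have Qv : Q *m v^T = 0.
  rewrite /v linearB /= !trmx_mul trmxK mulmxBr (mulmxA Q) QQ mul1mx.
  by rewrite subrr.
have vnz : v != 0.
  apply: contra uQ => /eqP v0; move: v0; rewrite /v => /eqP; rewrite subr_eq0 => /eqP ->.
  exact: submxMl.
have [v' [vv vsub]] := unit_vec vnz.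
have Qv' : Q *m v'^T = 0.
  have [c ->] : exists c, v' = c *m v.
    by exists (v' *m pinvmx v); rewrite mulmxKpV.
  by rewrite trmx_mul mulmxA Qv mul0mx.
have Q1Q1 : col_mx Q v' *m (col_mx Q v')^T = 1%:M.
  exact: orth_col.
have Q1U : (col_mx Q v' <= U)%MS by rewrite col_mx_sub QU (submx_trans vsub vU).
have [Q2 [Q22 Q12 Q2U]] := IH _ _ Q1Q1 Q1U (etrans (addSnnS_1 r k) rk).
move: Q12; rewrite mul_col_mx => /eqP; rewrite col_mx_eq0 => /andP [/eqP QQ2 /eqP vQ2].
exists (col_mx v' Q2); split.
- exact: (@orth_col R 1 k N v' Q2 vv Q22 vQ2).
- exact: (@orth_col2 R r 1 k N Q v' Q2 Qv' QQ2).
- by rewrite (@col_mx_sub _ 1 k) Q2U (submx_trans vsub vU).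
Qed.

Lemma gs_basis (R : realType) p N (U : 'M[R]_(p, N)) :
  exists Q : 'M[R]_(\rank U, N), Q *m Q^T = 1%:M /\ (Q <= U)%MS.
Proof.
have [|||Q [QQ _ QU]] := @gs_ext R p N U (\rank U) 0 0.
- by rewrite !flatmx0.
- by rewrite sub0mx.
- by [].
by exists Q.
Qed.

Lemma completion (R : realType) r k d (X : 'M[R]_(r, d)) :
  X *m X^T = 1%:M -> (r + k)%N = d ->
  exists Y : 'M[R]_(k, d), Y *m Y^T = 1%:M /\ X *m Y^T = 0.
Proof.
move=> XX e.
have [||Y [YY XY _]] := @gs_ext R d d 1%:M k r X XX.
- exact: submx1.
- by rewrite mxrank1.
by exists Y.
Qed.

Section Lap.
Variables (R : realType) (n : nat) (w : 'I_n -> 'I_n -> R).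
Hypothesis wg : weighted_graph w.

Definition blk d m (u : 'M[R]_(m, \sum_(i < n) d)) (i : 'I_n) : 'M[R]_(m, d) :=
  @submxrow _ n (fun _ => d) m u i.

Lemma lapE d (sigma : 'I_n -> 'I_n -> 'M[R]_d) m (u : 'M[R]_(m, \sum_(i < n) d)) :
  u *m conn_lap w sigma =
  \mxrow_j (\sum_i w i j *: (blk u j - blk u i *m sigma i j)).
Proof.
rewrite /conn_lap -{1}(submxrowK u) mul_mxrow_mxblock.
apply: eq_mxrow => j.
case: wg => wsym [w0 wpos].
rewrite (bigD1 j) //= eqxx [in RHS](bigD1 j) //= w0 scale0r add0r.
rewrite -scalemxAr mulmx1 /deg scaler_suml.
rewrite [X in X + _](bigD1 j) //= w0 scale0r add0r -big_split /=.
apply: eq_bigr => i /negbTE ij.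
by rewrite ij mulmxN -scalemxAr wsym scalerBr /blk.
Qed.

Lemma zm4 (V : zmodType) (A B C D : V) : C - B - (D - A) = (A - B) + (C - D).
Proof. by rewrite opprB addrA [C - B + A]addrC addrA (addrAC A) !addrA. Qed.

Lemma w_nadj i j : ~~ adj w i j -> w i j = 0.
Proof.
case: wg => _ [_ wpos] /negP H; apply/eqP; rewrite eq_le wpos andbT.
by rewrite leNgt; apply/negP.
Qed.

Lemma wsig_tr d (sigma : 'I_n -> 'I_n -> 'M[R]_d) : signature w sigma ->
  forall i j, w j i *: sigma j i = w i j *: (sigma i j)^T.
Proof.
move=> sg i j; case: wg => wsym _.
have [a|na] := boolP (adj w i j).
  by have [_ ->] := sg i j a; rewrite wsym.
by rewrite wsym w_nadj // !scale0r.
Qed.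

Lemma wsig_orth d (sigma : 'I_n -> 'I_n -> 'M[R]_d) : signature w sigma ->
  forall i j, w i j *: (sigma i j *m (sigma i j)^T) = w i j *: 1%:M.
Proof.
move=> sg i j; have [a|na] := boolP (adj w i j).
  by have [-> _] := sg i j a.
by rewrite w_nadj // !scale0r.
Qed.

Lemma blk_mxrow d m (F : 'I_n -> 'M[R]_(m, d)) j :
  blk (\mxrow_j F j) j = F j.
Proof. by rewrite /blk mxrowK. Qed.

Lemma lap_ker_edge d (sigma : 'I_n -> 'I_n -> 'M[R]_d) m
  (u : 'M[R]_(m, \sum_(i < n) d)) :
  signature w sigma -> u *m conn_lap w sigma = 0 ->
  forall i j, adj w i j -> blk u i *m sigma i j = blk u j.
Proof.
move=> sg; rewrite lapE => H.
set S := fun j => \sum_i w i j *: (blk u j - blk u i *m sigma i j).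
have S0 j : S j = 0.
  by have := congr1 (fun M => blk M j) H; rewrite blk_mxrow /blk submxrow0.
pose D i j := blk u i *m sigma i j - blk u j.
have key : \sum_i \sum_j w i j *: (D i j *m (D i j)^T) =
    \sum_j S j *m (blk u j)^T + \sum_i S i *m (blk u i)^T.
  have e1 : \sum_j S j *m (blk u j)^T = \sum_i \sum_j
      (w i j *: (blk u j - blk u i *m sigma i j)) *m (blk u j)^T.
    by rewrite exchange_big; apply: eq_bigr => j _; rewrite mulmx_suml.
  have e2 : \sum_i S i *m (blk u i)^T = \sum_i \sum_j
      (w j i *: (blk u i - blk u j *m sigma j i)) *m (blk u i)^T.
    by apply: eq_bigr => i _; rewrite mulmx_suml.
  rewrite {1}e1 e2 -big_split; apply: eq_bigr => i _ /=.
  rewrite -big_split; apply: eq_bigr => j _ /=.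
  case: wg => wsym _.
  rewrite /D linearB /= trmx_mul !mulmxBl !mulmxBr !mulmxA.
  have h1 : w i j *: (blk u i *m sigma i j *m (sigma i j)^T *m (blk u i)^T)
      = w i j *: (blk u i *m (blk u i)^T).
    by rewrite -(mulmxA (blk u i)) scalemxAl scalemxAr wsig_orth // -scalemxAr
      mulmx1 -scalemxAl.
  have h2 : w j i *: (blk u j *m sigma j i *m (blk u i)^T)
      = w i j *: (blk u j *m (sigma i j)^T *m (blk u i)^T).
    by rewrite [LHS]scalemxAl (scalemxAr (w j i) (blk u j)) wsig_tr //
      [RHS]scalemxAl (scalemxAr (w i j) (blk u j)).
  rewrite -!scalemxAl !mulmxBl !scalerBr h1 h2 (wsym j i).
  apply: zm4.
have tr0 : \sum_i \sum_j w i j * \tr (D i j *m (D i j)^T) = 0.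
  have := congr1 (@mxtrace _ _) key.
  have Z : \sum_j S j *m (blk u j)^T = 0.
    by apply: big1 => j _; rewrite S0 mul0mx.
  rewrite Z addr0 mxtrace0.
  move=> e; apply: etrans e; rewrite raddf_sum; apply: eq_bigr => i _.
  by rewrite raddf_sum; apply: eq_bigr => j _; rewrite -mxtraceZ.
move=> i j a.
have nn i' j' : 0 <= w i' j' * \tr (D i' j' *m (D i' j')^T).
  by case: wg => _ [_ wpos]; rewrite mulr_ge0 // tr_mulmx_tr_ge0.
move/eqP: tr0; rewrite psumr_eq0; last by move=> i' _; apply: sumr_ge0.
move=> /allP/(_ i); rewrite mem_index_enum => /(_ isT) /=.
rewrite psumr_eq0 // => /allP/(_ j); rewrite mem_index_enum => /(_ isT) /=.
rewrite mulf_eq0 => /orP [/eqP w0|/eqP t0].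
  by move: a; rewrite /adj w0 ltxx.
by apply/eqP; rewrite -subr_eq0; apply/eqP; apply: tr_mulmx_tr_eq0.
Qed.


Lemma lap_edge_ker d (sigma : 'I_n -> 'I_n -> 'M[R]_d) m
  (u : 'M[R]_(m, \sum_(i < n) d)) :
  (forall i j, adj w i j -> blk u i *m sigma i j = blk u j) ->
  u *m conn_lap w sigma = 0.
Proof.
move=> H; rewrite lapE -(mxrow0 (q_ := fun _ => d)); apply: eq_mxrow => j.
apply: big1 => i _; have [a|na] := boolP (adj w i j).
  by rewrite H // subrr scaler0.
by rewrite w_nadj // scale0r.
Qed.

Lemma blk_mul d m p (A : 'M[R]_(m, p)) (u : 'M[R]_(p, \sum_(i < n) d)) i :
  blk (A *m u) i = A *m blk u i.
Proof. by rewrite /blk mul_submxrow. Qed.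

Lemma blk_mxE d m (u : 'M[R]_(m, \sum_(i < n) d)) i :
  blk u i = u *m @submxrow _ n (fun _ => d) _ 1%:M i.
Proof. by rewrite /blk mul_submxrow mulmx1. Qed.

Lemma blk_eq0 d m (u : 'M[R]_(m, \sum_(i < n) d)) :
  (forall i, blk u i = 0) -> u = 0.
Proof.
move=> H; rewrite -(submxrowK u) -(mxrow0 (q_ := fun _ => d)).
by apply: eq_mxrow => i; apply: H.
Qed.

Hypothesis wc : connected_graph w.

Lemma conn_ind (i0 : 'I_n) (P : 'I_n -> Prop) : P i0 ->
  (forall a b, adj w a b -> P a -> P b) -> forall i, P i.
Proof.
move=> P0 step i; have /connectP [p pth ->] := wc i0 i.
elim: p i0 pth P0 => //= b p IH a /andP [ab pth] Pa.
exact: IH pth (step a b ab Pa).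
Qed.

Lemma ker_zero d (sigma : 'I_n -> 'I_n -> 'M[R]_d) m
  (u : 'M[R]_(m, \sum_(i < n) d)) (i0 : 'I_n) :
  signature w sigma -> u *m conn_lap w sigma = 0 -> blk u i0 = 0 -> u = 0.
Proof.
move=> sg uL u0; apply: blk_eq0; apply: (conn_ind u0) => a b ab ua.
by rewrite -(lap_ker_edge sg uL ab) ua mul0mx.
Qed.

End Lap.

Lemma castmx_mul (R : realType) m1 m1' m2 m2' m3 m3' (e1 : m1 = m1') (e2 : m2 = m2')
  (e3 : m3 = m3') (A : 'M[R]_(m1, m2)) (B : 'M[R]_(m2, m3)) :
  castmx (e1, e2) A *m castmx (e2, e3) B = castmx (e1, e3) (A *m B).
Proof. by case: m1' / e1; case: m2' / e2; case: m3' / e3; rewrite !castmx_id. Qed.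

Lemma castmx_mulr (R : realType) m1 m1' m2 m3 (e1 : m1 = m1')
  (A : 'M[R]_(m1, m2)) (B : 'M[R]_(m2, m3)) :
  castmx (e1, erefl m2) A *m B = castmx (e1, erefl m3) (A *m B).
Proof. by case: m1' / e1; rewrite !castmx_id. Qed.

Lemma castmx_tr (R : realType) m1 m1' m2 m2' (e1 : m1 = m1') (e2 : m2 = m2')
  (A : 'M[R]_(m1, m2)) : (castmx (e1, e2) A)^T = castmx (e2, e1) A^T.
Proof. by case: m1' / e1; case: m2' / e2; rewrite !castmx_id. Qed.

Lemma castmx_1 (R : realType) m m' (e : m = m') :
  castmx (e, e) (1%:M : 'M[R]_m) = 1%:M.
Proof. by case: m' / e; rewrite castmx_id. Qed.

Lemma iota_pow1 (R : realType) n k i j : @iota_pow R n k i j = 1%:M.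
Proof.
elim: k => [|k IH] /=; first by [].
by rewrite /sig_dsum IH /iota1 -scalar_mx_block.
Qed.

Theorem theorem2p9 (R : realType) (n d : nat) (w : 'I_n -> 'I_n -> R)
  (sigma : 'I_n -> 'I_n -> 'M[R]_d) :
  weighted_graph w -> connected_graph w ->
  signature w sigma -> ~ consistent w sigma ->
  let rho := nullity (conn_lap w sigma) in
  exists (d' : nat) (e : (rho + d')%N = d) (tau : 'I_n -> 'I_n -> 'M[R]_d'),
    d' = (d - rho)%N /\
    signature w tau /\
    conn_lap w tau \in unitmx /\
    switching_equiv w sigma
      (fun i j => castmx (e, e) (sig_dsum (@iota_pow R n rho) tau i j)).
Proof.
move=> wg wc sg ncons rho.
have n_gt0 : (0 < n)%N.
  apply: contraT => n0; exfalso; apply: ncons => c [sz _].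
  case: c sz => [|x c] //= _.
  by have := ltn_ord x; move: n0; rewrite -leqNgt => n0 xn; have := leq_trans xn n0.
pose i0 := Ordinal n_gt0.
pose N := (\sum_(i < n) d)%N.
pose L := conn_lap w sigma.
pose K := kermx L.
pose E := @submxrow _ n (fun _ => d) _ (1%:M : 'M[R]_N) i0.
pose U := K *m E.
have KL : K *m L = 0 := mulmx_ker L.
have rK : \rank K = rho by rewrite mxrank_ker.
have rU : \rank U = rho.
  have := mxrank_mul_ker K E.
  have -> : (K :&: kermx E)%MS = 0.
    apply: (ker_zero wg wc (i0 := i0) sg).
      by apply/sub_kermxP; exact: capmxSl.
    by rewrite blk_mxE -/E; apply/sub_kermxP; exact: capmxSr.
  by rewrite mxrank0 addn0 rK.
have [|||Q [QQ _ QU]] := @gs_ext R N d U rho 0 0.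
- by rewrite !flatmx0.
- by rewrite sub0mx.
- by rewrite rU.
pose Xf := Q *m pinvmx U *m K.
have XfL : Xf *m L = 0 by rewrite /Xf -mulmxA KL mulmx0.
pose X i := blk Xf i.
have X0 : X i0 = Q by rewrite /X blk_mxE -/E -mulmxA mulmxKpV.
have Xedge : forall i j, adj w i j -> X i *m sigma i j = X j.
  by move=> i j a; rewrite /X (lap_ker_edge wg sg XfL a).
have XX : forall i, X i *m (X i)^T = 1%:M.
  apply: (@conn_ind R n w wc i0 (fun i => X i *m (X i)^T = 1%:M)).
    by rewrite X0.
  move=> a b ab H; have [o _] := sg a b ab.
  by rewrite -(Xedge a b ab) trmx_mul mulmxA -(mulmxA (X a)) o mulmx1 H.
have rho_le : (rho <= d)%N by rewrite -rU rank_leq_col.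
pose d' := (d - rho)%N.
have e : (rho + d')%N = d by rewrite subnKC.
have HY0 : forall i, exists Y : 'M[R]_(d', d),
    Y *m Y^T = 1%:M /\ X i *m Y^T = 0.
  by move=> i; exact: completion (XX i) e.
have [Y HY] := fin_all_exists HY0.
exists d', e.
pose tau i j := Y i *m sigma i j *m (Y j)^T.
exists tau.
pose F i := col_mx (X i) (Y i).
have FF i : F i *m (F i)^T = 1%:M := orth_col (XX i) (HY i).1 (HY i).2.
have FtF i : (X i)^T *m X i + (Y i)^T *m Y i = 1%:M.
  pose G := castmx (e, erefl d) (F i).
  have : G *m G^T = 1%:M by rewrite /G castmx_tr castmx_mul FF castmx_1.
  move/mulmx1C; rewrite /G castmx_tr castmx_mul castmx_id.
  by rewrite /F tr_col_mx mul_row_col.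
have Ytau : forall i j, adj w i j -> Y i *m sigma i j = tau i j *m Y j.
  move=> i j a; have [o _] := sg i j a.
  have h : Y i *m sigma i j *m (X j)^T = 0.
    rewrite -(Xedge i j a) trmx_mul mulmxA -(mulmxA (Y i)) o mulmx1.
    by rewrite -(trmxK (Y i)) -trmx_mul (HY i).2 trmx0.
  by rewrite -{1}(mulmx1 (Y i *m sigma i j)) -(FtF j) mulmxDr !mulmxA h mul0mx add0r.
have sgt : signature w tau.
  move=> i j a; have [o sji] := sg i j a; split.
    rewrite /orthogonal_mx.
    have hT : forall T : 'M[R]_d', T *m T^T = (T *m Y j) *m (T *m Y j)^T.
      by move=> T; rewrite trmx_mul !mulmxA -(mulmxA T) (HY j).1 mulmx1.
    rewrite hT.
    by rewrite -Ytau // trmx_mul mulmxA -(mulmxA (Y i)) o mulmx1 (HY i).1.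
  by rewrite /tau sji !trmx_mul trmxK mulmxA.
split; first by [].
split; first exact: sgt.
split.
  pose Lt := conn_lap w tau.
  have H0 : forall m (v : 'M[R]_(m, \sum_(i < n) d')), v *m Lt = 0 -> v = 0.
    move=> m v vL.
    have vE := lap_ker_edge wg sgt vL.
    pose u := (\mxrow_i (blk v i *m Y i) : 'M[R]_(m, \sum_(i < n) d)).
    have bu i : blk u i = blk v i *m Y i by rewrite /u blk_mxrow.
    have uL : u *m L = 0.
      apply: (lap_edge_ker wg) => i j a.
      by rewrite !bu -mulmxA Ytau // mulmxA vE.
    have u0 : blk u i0 = 0.
      have UQ : (U <= Q)%MS.
        have := mxrank_leqif_eq QU; rewrite (orth_rank QQ) rU => /leqif_refl.
        by case/andP.
      have : (blk u i0 <= Q)%MS.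
        rewrite blk_mxE -/E; apply: submx_trans UQ; apply: submxMr.
        by apply/sub_kermxP; exact: uL.
      case/submxP => c uc.
      have : blk u i0 *m Q^T = 0.
        rewrite bu -X0 -mulmxA -(trmxK (Y i0)) -trmx_mul (HY i0).2.
        by rewrite trmx0 mulmx0.
      by rewrite uc -mulmxA QQ mulmx1 => ->; rewrite mul0mx.
    have u00 := ker_zero wg wc sg uL u0.
    apply: blk_eq0 => i.
    have := congr1 (fun M => blk M i) u00; rewrite bu /blk submxrow0 => h.
    by rewrite -(mulmx1 (submxrow v i)) -(HY i).1 mulmxA h mul0mx.
  have := H0 _ (kermx Lt) (mulmx_ker Lt).
  move=> /eqP; rewrite -mxrank_eq0 mxrank_ker subn_eq0 => h.
  by rewrite -row_free_unit /row_free eqn_leq rank_leq_row h.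
exists (fun i => castmx (e, erefl d) (F i)); split.
  by move=> i; rewrite /orthogonal_mx castmx_tr castmx_mul FF castmx_1.
move=> i j a.
rewrite /sig_dsum iota_pow1 castmx_mul castmx_mulr.
congr (castmx _ _).
by rewrite /F mul_col_mx mul_block_col !mul1mx !mul0mx addr0 add0r Xedge // Ytau.
Qed.
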